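(* Let $\mathcal G$ be a graph and $\mathcal F_a\mathcal G$ the free AU-bigroupoid on $\mathcal G$. For any two 1-cells $u,v:A\to B$ of $\mathcal F_a\mathcal G$ there is at most one 2-cell $u\Rightarrow v$.
   Context: A graph $\mathcal G$ consists of a set $\mathcal G_0$ of nodes and, for each $A,B\in\mathcal G_0$, a set $\mathcal G(A,B)$ of edges; a graph morphism consists of a function on nodes and functions on edge sets compatible with sources and targets. A bigroupoid consists of a set of 0-cells, hom-groupoids $\mathcal B(A,B)$ (objects: 1-cells; arrows: 2-cells), composition functors $*$, identity 1-cells $1_A$, inversion functors $(-)^*$ and natural isomorphisms $\mathbf a:(h*g)*f\Rightarrow h*(g*f)$, $\mathbf l:1*f\Rightarrow f$, $\mathbf r:f*1\Rightarrow f$, $\mathbf e:f^**f\Rightarrow 1$, $\mathbf i:1\Rightarrow f*f^*$ satisfying the pentagon, $(\mathrm{id}*\mathbf l)\circ\mathbf a=\mathbf r*\mathrm{id}$, and $\mathbf r_f\circ(\mathrm{id}*\mathbf e_f)\circ\mathbf a\circ(\mathbf i_f*\mathrm{id})=\mathbf l_f$. A strict morphism of bigroupoids preserves all this structure on the nose. An AU-bigroupoid is a bigroupoid in which $\mathbf a,\mathbf l,\mathbf r$ are identities. Every bigroupoid has an underlying graph (0-cells and 1-cells). The free AU-bigroupoid $\mathcal F_a\mathcal G$ comes with a graph morphism $I_a:\mathcal G\to\mathcal F_a\mathcal G$ such that for every AU-bigroupoid $\mathcal B$ and graph morphism $F:\mathcal G\to\mathcal B$ there is a unique strict morphism $\widetilde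 F:\mathcal F_a\mathcal G\to\mathcal B$ with $\widetilde F I_a=F$. (Concretely: 0-cells are the nodes of $\mathcal G$; 1-cells are formal words in edges, identities, $*$ and $(-)^*$ modulo strict associativity and unitality; 2-cells are generated by $\mathbf e_f,\mathbf i_f$, their inverses and identities under $*$, $(-)^*$, $\circ$, modulo the bigroupoid axioms.) *)

(* Defs.v *)
Record Graph := {
  node : Type;
  edge : node -> node -> Type
}.

Record GraphMor (G H : Graph) := {
  gm0 : node G -> node H;
  gm1 : forall A B : node G, edge G A B -> edge H (gm0 A) (gm0 B)
}.
Arguments gm0 {G H} _ _.
Arguments gm1 {G H} _ {A B} _.

Definition gcomp {G H K : Graph} (F2 : GraphMor H K) (F1 : GraphMor G H)
  : GraphMor G K :=
  {| gm0 := fun A => gm0 F2 (gm0 F1 A);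
     gm1 := fun A B e => gm1 F2 (gm1 F1 e) |}.

(* ---------- Bigroupoids ----------
   hc g f  = g * f  (f : A -> B, g : B -> C)
   vcomp b a = b o a (vertical composition, a first)
   asc = a, lu = l, ru = r, ev = e, co = i, inv1/inv2 = (-)^* *)
Record Bigroupoid := {
  obj : Type;
  hom : obj -> obj -> Type;
  cell : forall {A B : obj}, hom A B -> hom A B -> Type;
  vid : forall {A B} (f : hom A B), cell f f;
  vcomp : forall {A B} {f g h : hom A B}, cell g h -> cell f g -> cell f h;
  vinv : forall {A B} {f g : hom A B}, cell f g -> cell g f;
  vcompA : forall A B (f g h k : hom A B) (c : cell h k) (b : cell g h) (a : cell f g),
      vcomp c (vcomp b a) = vcomp (vcomp c b) a;
  vcomp1l : forall A B (f g : hom A B) (a : cell f g), vcomp (vid g) a = a;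
  vcomp1r : forall A B (f g : hom A B) (a : cell f g), vcomp a (vid f) = a;
  vinvl : forall A B (f g : hom A B) (a : cell f g), vcomp (vinv a) a = vid f;
  vinvr : forall A B (f g : hom A B) (a : cell f g), vcomp a (vinv a) = vid g;
  hc : forall {A B C}, hom B C -> hom A B -> hom A C;
  hc2 : forall {A B C} {g g' : hom B C} {f f' : hom A B},
      cell g g' -> cell f f' -> cell (hc g f) (hc g' f');
  hc2_id : forall A B C (g : hom B C) (f : hom A B),
      hc2 (vid g) (vid f) = vid (hc g f);
  hc2_comp : forall A B C (g g' g'' : hom B C) (f f' f'' : hom A B)
      (b : cell g g') (b' : cell g' g'') (a : cell f f') (a' : cell f' f''),
      hc2 (vcomp b' b) (vcomp a' a) = vcomp (hc2 b' a') (hc2 b a);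
  id1 : forall A, hom A A;
  inv1 : forall {A B}, hom A B -> hom B A;
  inv2 : forall {A B} {f g : hom A B}, cell f g -> cell (inv1 f) (inv1 g);
  inv2_id : forall A B (f : hom A B), inv2 (vid f) = vid (inv1 f);
  inv2_comp : forall A B (f g h : hom A B) (a : cell f g) (b : cell g h),
      inv2 (vcomp b a) = vcomp (inv2 b) (inv2 a);
  asc : forall {A B C D} (h : hom C D) (g : hom B C) (f : hom A B),
      cell (hc (hc h g) f) (hc h (hc g f));
  asc_nat : forall A B C D (h h' : hom C D) (g g' : hom B C) (f f' : hom A B)
      (c : cell h h') (b : cell g g') (a : cell f f'),
      vcomp (asc h' g' f') (hc2 (hc2 c b) a) = vcomp (hc2 c (hc2 b a)) (asc h g f);
  lu : forall {A B} (f : hom A B), cell (hc (id1 B) f) f;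
  lu_nat : forall A B (f f' : hom A B) (a : cell f f'),
      vcomp (lu f') (hc2 (vid (id1 B)) a) = vcomp a (lu f);
  ru : forall {A B} (f : hom A B), cell (hc f (id1 A)) f;
  ru_nat : forall A B (f f' : hom A B) (a : cell f f'),
      vcomp (ru f') (hc2 a (vid (id1 A))) = vcomp a (ru f);
  ev : forall {A B} (f : hom A B), cell (hc (inv1 f) f) (id1 A);
  ev_nat : forall A B (f g : hom A B) (a : cell f g),
      vcomp (ev g) (hc2 (inv2 a) a) = ev f;
  co : forall {A B} (f : hom A B), cell (id1 B) (hc f (inv1 f));
  co_nat : forall A B (f g : hom A B) (a : cell f g),
      vcomp (hc2 a (inv2 a)) (co f) = co g;
  pentagon : forall A B C D E (k : hom D E) (h : hom C D) (g : hom B C) (f : hom A B),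
      vcomp (hc2 (vid k) (asc h g f))
            (vcomp (asc k (hc h g) f) (hc2 (asc k h g) (vid f)))
      = vcomp (asc k h (hc g f)) (asc (hc k h) g f);
  triangle : forall A B C (g : hom B C) (f : hom A B),
      vcomp (hc2 (vid g) (lu f)) (asc g (id1 B) f) = hc2 (ru g) (vid f);
  inverse_ax : forall A B (f : hom A B),
      vcomp (ru f) (vcomp (hc2 (vid f) (ev f))
                          (vcomp (asc f (inv1 f) f) (hc2 (co f) (vid f))))
      = lu f
}.



Arguments vid {b0 A B} f.
Arguments vcomp {b0 A B f g h} _ _.
Arguments hc {b0 A B C} _ _.
Arguments hc2 {b0 A B C g g' f f'} _ _.
Arguments inv1 {b0 A B} _.
Arguments inv2 {b0 A B f g} _.
Arguments asc {b0 A B C D} h g f.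
Arguments lu {b0 A B} f.
Arguments ru {b0 A B} f.
Arguments ev {b0 A B} f.
Arguments co {b0 A B} f.

Definition cell_of_eq {X : Bigroupoid} {A B : obj X} {f g : hom X A B} (p : f = g)
  : cell X f g :=
  match p in _ = g' return cell X f g' with eq_refl => vid f end.

(* AU-bigroupoid: a, l, r are identities (so the relevant 1-cells coincide). *)
Definition isAU (X : Bigroupoid) : Prop :=
  (forall (A B C D : obj X) (h : hom X C D) (g : hom X B C) (f : hom X A B),
      exists p : hc (hc h g) f = hc h (hc g f), asc h g f = cell_of_eq p) /\
  (forall (A B : obj X) (f : hom X A B),
      exists p : hc (id1 X B) f = f, lu f = cell_of_eq p) /\
  (forall (A B : obj X) (f : hom X A B),
      exists p : hc f (id1 X A) = f, ru f = cell_of_eq p).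

Definition cell_heq {X : Bigroupoid} {A B : obj X} {f g f' g' : hom X A B}
  (a : cell X f g) (b : cell X f' g') : Prop :=
  exists (p : f = f') (q : g = g'), vcomp (cell_of_eq q) a = vcomp b (cell_of_eq p).

Record StrictMor (X Y : Bigroupoid) := {
  sm0 : obj X -> obj Y;
  sm1 : forall {A B : obj X}, hom X A B -> hom Y (sm0 A) (sm0 B);
  sm2 : forall {A B : obj X} {f g : hom X A B}, cell X f g -> cell Y (sm1 f) (sm1 g);
  sm_hc : forall A B C (g : hom X B C) (f : hom X A B), sm1 (hc g f) = hc (sm1 g) (sm1 f);
  sm_id1 : forall A, sm1 (id1 X A) = id1 Y (sm0 A);
  sm_inv1 : forall A B (f : hom X A B), sm1 (inv1 f) = inv1 (sm1 f);
  sm_vid : forall A B (f : hom X A B), sm2 (vid f) = vid (sm1 f);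
  sm_vcomp : forall A B (f g h : hom X A B) (b : cell X g h) (a : cell X f g),
      sm2 (vcomp b a) = vcomp (sm2 b) (sm2 a);
  sm_hc2 : forall A B C (g g' : hom X B C) (f f' : hom X A B) (b : cell X g g') (a : cell X f f'),
      cell_heq (sm2 (hc2 b a)) (hc2 (sm2 b) (sm2 a));
  sm_inv2 : forall A B (f g : hom X A B) (a : cell X f g),
      cell_heq (sm2 (inv2 a)) (inv2 (sm2 a));
  sm_asc : forall A B C D (h : hom X C D) (g : hom X B C) (f : hom X A B),
      cell_heq (sm2 (asc h g f)) (asc (sm1 h) (sm1 g) (sm1 f));
  sm_lu : forall A B (f : hom X A B), cell_heq (sm2 (lu f)) (lu (sm1 f));
  sm_ru : forall A B (f : hom X A B), cell_heq (sm2 (ru f)) (ru (sm1 f));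
  sm_ev : forall A B (f : hom X A B), cell_heq (sm2 (ev f)) (ev (sm1 f));
  sm_co : forall A B (f : hom X A B), cell_heq (sm2 (co f)) (co (sm1 f))
}.
Arguments sm0 {X Y} _ _.
Arguments sm1 {X Y} _ {A B} _.
Arguments sm2 {X Y} _ {A B f g} _.

Definition underlying (X : Bigroupoid) : Graph :=
  {| node := obj X; edge := hom X |}.

Definition sm_graph {X Y : Bigroupoid} (F : StrictMor X Y)
  : GraphMor (underlying X) (underlying Y) :=
  @Build_GraphMor (underlying X) (underlying Y) (sm0 F) (fun A B f => sm1 F f).

Definition is_free_AU_bigroupoid (G : Graph) (Fa : Bigroupoid)
  (Ia : GraphMor G (underlying Fa)) : Prop :=
  isAU Fa /\
  forall (B : Bigroupoid), isAU B ->
  forall (F : GraphMor G (underlying B)),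
    exists! Ft : StrictMor Fa B, gcomp (sm_graph Ft) Ia = F.

(* Main.v *)
Require Import Defs.
From Stdlib Require Import ProofIrrelevance FunctionalExtensionality PropExtensionality IndefiniteDescription.

Section Heq.
Context {X : Bigroupoid}.

Definition tr {A B : obj X} {f g f' g' : hom X A B} (p : f = f') (q : g = g') (a : cell X f g)
  : cell X f' g' :=
  match p in _ = f0 return cell X f0 g' with eq_refl =>
    match q in _ = g0 return cell X f g0 with eq_refl => a end end.

Definition heq {A B : obj X} {f g f' g' : hom X A B} (a : cell X f g) (b : cell X f' g') : Prop :=
  exists (p : f = f') (q : g = g'), tr p q a = b.

Lemma UIP' {T : Type} {x y : T} (p q : x = y) : p = q.
Proof. apply proof_irrelevance. Qed.

Lemma heq_refl {A B} {f g : hom X A B} (a : cell X f g) : heq a a.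
Proof. exists eq_refl, eq_refl. reflexivity. Qed.

Lemma heq_eq {A B} {f g : hom X A B} (a b : cell X f g) : heq a b -> a = b.
Proof. intros [p [q H]]. rewrite (UIP' p eq_refl), (UIP' q eq_refl) in H. exact H. Qed.

Lemma eq_heq {A B} {f g : hom X A B} (a b : cell X f g) : a = b -> heq a b.
Proof. intros ->. apply heq_refl. Qed.

Lemma heq_sym {A B} {f g f' g' : hom X A B} (a : cell X f g) (b : cell X f' g') : heq a b -> heq b a.
Proof. intros [p [q H]]. destruct p, q. subst. apply heq_refl. Qed.

Lemma heq_trans {A B} {f g f' g' f'' g'' : hom X A B} (a : cell X f g) (b : cell X f' g')
  (c : cell X f'' g'') : heq a b -> heq b c -> heq a c.
Proof. intros [p [q H]] [p' [q' H']]. destruct p, q, p', q'. subst. apply heq_refl. Qed.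

Lemma heq_vcomp {A B} {f g h f' g' h' : hom X A B} (a : cell X f g) (b : cell X g h)
  (a' : cell X f' g') (b' : cell X g' h') : heq a a' -> heq b b' -> heq (vcomp b a) (vcomp b' a').
Proof.
  intros [p [q H]] [p' [q' H']]. destruct p, q. rewrite (UIP' p' eq_refl) in H'. destruct q'.
  subst. apply heq_refl. Qed.

Lemma heq_hc2 {A B C} {g g' g2 g2' : hom X B C} {f f' f2 f2' : hom X A B}
  (b : cell X g g') (a : cell X f f') (b2 : cell X g2 g2') (a2 : cell X f2 f2') :
  heq b b2 -> heq a a2 -> heq (hc2 b a) (hc2 b2 a2).
Proof. intros [p [q H]] [p' [q' H']]. destruct p, q, p', q'. subst. apply heq_refl. Qed.

Lemma heq_inv2 {A B} {f g f' g' : hom X A B} (a : cell X f g) (b : cell X f' g') :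
  heq a b -> heq (inv2 a) (inv2 b).
Proof. intros [p [q H]]. destruct p, q. subst. apply heq_refl. Qed.

Lemma heq_vinv {A B} {f g f' g' : hom X A B} (a : cell X f g) (b : cell X f' g') :
  heq a b -> heq (vinv X a) (vinv X b).
Proof. intros [p [q H]]. destruct p, q. subst. apply heq_refl. Qed.

Lemma heq_ce {A B} {f g : hom X A B} (p : f = g) : heq (cell_of_eq p) (vid f).
Proof. destruct p. apply heq_refl. Qed.

Lemma heq_vid {A B} {f g : hom X A B} (p : f = g) : heq (vid f) (vid g).
Proof. destruct p. apply heq_refl. Qed.

Lemma heq_ce_l {A B} {f g h : hom X A B} (p : g = h) (a : cell X f g) : heq (vcomp (cell_of_eq p) a) a.
Proof. destruct p. simpl. rewrite vcomp1l. apply heq_refl. Qed.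

Lemma heq_ce_r {A B} {f g h : hom X A B} (p : f = g) (a : cell X g h) : heq (vcomp a (cell_of_eq p)) a.
Proof. destruct p. simpl. rewrite vcomp1r. apply heq_refl. Qed.

Lemma heq_vid_l {A B} {f g h k : hom X A B} (a : cell X f g) (b : cell X g h) :
  heq b (vid k) -> heq (vcomp b a) a.
Proof. intros [p [q H]]. destruct p. destruct q. simpl in H. subst. rewrite vcomp1l. apply heq_refl. Qed.

Lemma heq_vid_r {A B} {f g h k : hom X A B} (a : cell X f g) (b : cell X g h) :
  heq a (vid k) -> heq (vcomp b a) b.
Proof. intros [p [q H]]. destruct p. destruct q. simpl in H. subst. rewrite vcomp1r. apply heq_refl. Qed.

End Heq.


Section Gpd.
Context {X : Bigroupoid}.

Lemma inv_unique {A B} {f g : hom X A B} (a : cell X f g) (b : cell X g f) :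
  vcomp b a = vid f -> b = vinv X a.
Proof.
  intros H. rewrite <- (vcomp1r _ _ _ _ _ b). rewrite <- (vinvr _ _ _ _ _ a).
  rewrite vcompA, H, vcomp1l. reflexivity. Qed.

Lemma vcancel_l {A B} {f g h : hom X A B} (n : cell X g h) (a b : cell X f g) :
  vcomp n a = vcomp n b -> a = b.
Proof. intros H. rewrite <- (vcomp1l _ _ _ _ _ a), <- (vcomp1l _ _ _ _ _ b), <- (vinvl _ _ _ _ _ n),
  <- !vcompA, H. reflexivity. Qed.

Lemma vcancel_r {A B} {f g h : hom X A B} (n : cell X f g) (a b : cell X g h) :
  vcomp a n = vcomp b n -> a = b.
Proof. intros H. rewrite <- (vcomp1r _ _ _ _ _ a), <- (vcomp1r _ _ _ _ _ b), <- (vinvr _ _ _ _ _ n),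
  !vcompA, H. reflexivity. Qed.

Lemma vinv_vinv {A B} {f g : hom X A B} (a : cell X f g) : vinv X (vinv X a) = a.
Proof. symmetry. apply inv_unique. apply vinvr. Qed.

Lemma vinv_vcomp {A B} {f g h : hom X A B} (a : cell X f g) (b : cell X g h) :
  vinv X (vcomp b a) = vcomp (vinv X a) (vinv X b).
Proof. symmetry. apply inv_unique. rewrite <- vcompA, (vcompA _ _ _ _ _ _ _ (vinv X b)),
  vinvl, vcomp1l, vinvl. reflexivity. Qed.

Lemma hc2_vinv {A B C} {g g' : hom X B C} {f f' : hom X A B} (b : cell X g g') (a : cell X f f') :
  hc2 (vinv X b) (vinv X a) = vinv X (hc2 b a).
Proof. apply inv_unique. rewrite <- hc2_comp, !vinvl. apply hc2_id. Qed.

Lemma hc2_split_l {A B C} {g g' : hom X B C} {f f' : hom X A B} (b : cell X g g') (a : cell X f f') :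
  hc2 b a = vcomp (hc2 b (vid f')) (hc2 (vid g) a).
Proof. rewrite <- hc2_comp, vcomp1r, vcomp1l. reflexivity. Qed.

Lemma hc2_split_r {A B C} {g g' : hom X B C} {f f' : hom X A B} (b : cell X g g') (a : cell X f f') :
  hc2 b a = vcomp (hc2 (vid g') a) (hc2 b (vid f)).
Proof. rewrite <- hc2_comp, vcomp1r, vcomp1l. reflexivity. Qed.

Lemma hc2_vcomp_r {A B C} (g : hom X B C) {f f' f'' : hom X A B} (a : cell X f f') (a' : cell X f' f'') :
  hc2 (vid g) (vcomp a' a) = vcomp (hc2 (vid g) a') (hc2 (vid g) a).
Proof. rewrite <- hc2_comp, vcomp1r. reflexivity. Qed.

Lemma hc2_vcomp_l {A B C} {g g' g'' : hom X B C} (f : hom X A B) (b : cell X g g') (b' : cell X g' g'') :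
  hc2 (vcomp b' b) (vid f) = vcomp (hc2 b' (vid f)) (hc2 b (vid f)).
Proof. rewrite <- hc2_comp, vcomp1r. reflexivity. Qed.

Lemma hc2_vid_vinv {A B C} (g : hom X B C) {f f' : hom X A B} (a : cell X f f') :
  hc2 (vid g) (vinv X a) = vinv X (hc2 (vid g) a).
Proof. rewrite <- hc2_vinv. f_equal. apply inv_unique. apply vcomp1l. Qed.

Lemma hc2_vinv_vid {A B C} {g g' : hom X B C} (f : hom X A B) (b : cell X g g') :
  hc2 (vinv X b) (vid f) = vinv X (hc2 b (vid f)).
Proof. rewrite <- hc2_vinv. f_equal. apply inv_unique. apply vcomp1l. Qed.

Lemma heq_vinv_vid {A B} {f g : hom X A B} (a : cell X f g) : heq a (vid f) -> heq (vinv X a) (vid g).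
Proof. intros [p [q H]]. destruct q. rewrite (UIP' p eq_refl) in H. simpl in H. subst. apply eq_heq. symmetry. apply inv_unique. apply vcomp1l. Qed.

End Gpd.

Section AU.
Context {X : Bigroupoid} (HAU : isAU X).

Lemma assoc_eq {A B C D : obj X} (h : hom X C D) (g : hom X B C) (f : hom X A B) :
  hc (hc h g) f = hc h (hc g f).
Proof. destruct HAU as [H _]. destruct (H _ _ _ _ h g f) as [p _]. exact p. Qed.

Lemma lu_eq {A B : obj X} (f : hom X A B) : hc (id1 X B) f = f.
Proof. destruct HAU as [_ [H _]]. destruct (H _ _ f) as [p _]. exact p. Qed.

Lemma ru_eq {A B : obj X} (f : hom X A B) : hc f (id1 X A) = f.
Proof. destruct HAU as [_ [_ H]]. destruct (H _ _ f) as [p _]. exact p. Qed.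

Lemma heq_asc {A B C D : obj X} (h : hom X C D) (g : hom X B C) (f : hom X A B) :
  heq (asc h g f) (vid (hc (hc h g) f)).
Proof. destruct HAU as [H _]. destruct (H _ _ _ _ h g f) as [p ->]. apply heq_ce. Qed.

Lemma heq_lu {A B : obj X} (f : hom X A B) : heq (lu f) (vid (hc (id1 X B) f)).
Proof. destruct HAU as [_ [H _]]. destruct (H _ _ f) as [p ->]. apply heq_ce. Qed.

Lemma heq_ru {A B : obj X} (f : hom X A B) : heq (ru f) (vid (hc f (id1 X A))).
Proof. destruct HAU as [_ [_ H]]. destruct (H _ _ f) as [p ->]. apply heq_ce. Qed.

Lemma hc2_assoc {A B C D : obj X} {h h' : hom X C D} {g g' : hom X B C} {f f' : hom X A B}
  (c : cell X h h') (b : cell X g g') (a : cell X f f') :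
  heq (hc2 (hc2 c b) a) (hc2 c (hc2 b a)).
Proof.
  pose proof (asc_nat X _ _ _ _ h h' g g' f f' c b a) as E.
  apply heq_trans with (b := vcomp (asc h' g' f') (hc2 (hc2 c b) a)).
  apply heq_sym; eapply heq_vid_l; apply heq_asc.
  rewrite E. eapply heq_vid_r; apply heq_asc. Qed.

Lemma hc2_lid {A B : obj X} {f f' : hom X A B} (a : cell X f f') :
  heq (hc2 (vid (id1 X B)) a) a.
Proof.
  pose proof (lu_nat X _ _ f f' a) as E.
  apply heq_trans with (b := vcomp (lu f') (hc2 (vid (id1 X B)) a)).
  apply heq_sym; eapply heq_vid_l; apply heq_lu.
  rewrite E. eapply heq_vid_r; apply heq_lu. Qed.

Lemma hc2_rid {A B : obj X} {f f' : hom X A B} (a : cell X f f') :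
  heq (hc2 a (vid (id1 X A))) a.
Proof.
  pose proof (ru_nat X _ _ f f' a) as E.
  apply heq_trans with (b := vcomp (ru f') (hc2 a (vid (id1 X A)))).
  apply heq_sym; eapply heq_vid_l; apply heq_ru.
  rewrite E. eapply heq_vid_r; apply heq_ru. Qed.

Lemma zigzag {A B : obj X} (f : hom X A B) :
  heq (vcomp (hc2 (vid f) (ev f)) (vcomp (asc f (inv1 f) f) (hc2 (co f) (vid f)))) (vid f).
Proof.
  pose proof (inverse_ax X _ _ f) as E.
  apply heq_trans with (b := vcomp (ru f) (vcomp (hc2 (vid f) (ev f))
                          (vcomp (asc f (inv1 f) f) (hc2 (co f) (vid f))))).
  apply heq_sym; eapply heq_vid_l; apply heq_ru.
  rewrite E. eapply heq_trans; [apply heq_lu | apply heq_vid, lu_eq]. Qed.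

End AU.


Section Cls.
Context {X : Bigroupoid}.

Definition Cls (Y A : obj X) : Type :=
  {P : hom X Y A -> Prop | exists u, P = fun v => inhabited (cell X u v)}.

Definition cls {Y A : obj X} (u : hom X Y A) : Cls Y A :=
  exist _ (fun v => inhabited (cell X u v)) (ex_intro _ u eq_refl).

Definition rep {Y A : obj X} (c : Cls Y A) : hom X Y A :=
  proj1_sig (constructive_indefinite_description _ (proj2_sig c)).

Lemma rep_spec {Y A : obj X} (c : Cls Y A) :
  proj1_sig c = fun v => inhabited (cell X (rep c) v).
Proof. unfold rep. destruct (constructive_indefinite_description _ _) as [u Hu]. exact Hu. Qed.

Lemma Cls_ext {Y A : obj X} (c d : Cls Y A) : proj1_sig c = proj1_sig d -> c = d.
Proof. destruct c as [P HP], d as [Q HQ]. simpl. intros ->. f_equal. apply proof_irrelevance. Qed.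

Definition pick {T : Type} (H : inhabited T) : T :=
  proj1_sig (constructive_indefinite_description (fun _ : T => True)
    (match H with inhabits x => ex_intro _ x I end)).

Lemma cls_eq {Y A : obj X} (u v : hom X Y A) : cell X u v -> cls u = cls v.
Proof.
  intros a. apply Cls_ext. simpl. apply functional_extensionality. intros w.
  apply propositional_extensionality. split; intros [b].
  - constructor. exact (vcomp b (vinv X a)).
  - constructor. exact (vcomp b a).
Qed.

Lemma cls_rep {Y A : obj X} (c : Cls Y A) : cls (rep c) = c.
Proof. apply Cls_ext. simpl. symmetry. apply rep_spec. Qed.

Definition rho {Y A : obj X} (u : hom X Y A) : cell X u (rep (cls u)).
Proof.
  apply pick. pose proof (rep_spec (cls u)) as H. simpl in H.
  assert (H2 := f_equal (fun P => P (rep (cls u))) H). simpl in H2.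
  rewrite H2. constructor. apply vid.
Defined.

End Cls.


Section B.
Context {X : Bigroupoid} (HAU : isAU X).

Record H1 (A B : obj X) := mkH1 {
  u1 : hom X A B;
  n1 : forall (Y : obj X) (c : Cls Y A), cell X (hc u1 (rep c)) (rep (cls (hc u1 (rep c))))
}.
Arguments mkH1 {A B} _ _.
Arguments u1 {A B} _.
Arguments n1 {A B} _ {Y} _.

Record H2 {A B : obj X} (U V : H1 A B) := mkH2 {
  c2 : cell X (u1 U) (u1 V);
  c2p : forall (Y : obj X) (c : Cls Y A),
    heq (vcomp (n1 V c) (hc2 c2 (vid (rep c)))) (n1 U c)
}.
Arguments mkH2 {A B U V} _ _.
Arguments c2 {A B U V} _.
Arguments c2p {A B U V} _ _ _.

Lemma heq_n1 {A B} (U : H1 A B) {Y} (k k' : Cls Y A) : k = k' -> heq (n1 U k) (n1 U k').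
Proof. intros ->. apply heq_refl. Qed.

Lemma whisker_faithful {A B : obj X} {u v : hom X A B} (r : hom X A A) (kap : cell X (id1 X A) r)
  (a a' : cell X u v) : hc2 a (vid r) = hc2 a' (vid r) -> a = a'.
Proof.
  intros H.
  assert (E : forall b : cell X u v, hc2 b (vid (id1 X A)) =
     vcomp (hc2 (vid v) (vinv X kap)) (vcomp (hc2 b (vid r)) (hc2 (vid u) kap))).
  { intros b. rewrite <- !hc2_comp, !vcomp1l, vcomp1r, vinvl. reflexivity. }
  apply heq_eq. apply heq_trans with (b := hc2 a (vid (id1 X A))).
  apply heq_sym. apply (hc2_rid HAU).
  rewrite E, H, <- E. apply (hc2_rid HAU).
Qed.

Lemma H2_uniq {A B} {U V : H1 A B} (x y : H2 U V) : x = y.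
Proof.
  assert (Hc : c2 x = c2 y).
  { set (c0 := cls (id1 X A)).
    pose proof (c2p x A c0) as Hx. pose proof (c2p y A c0) as Hy.
    apply (whisker_faithful (rep c0) (rho (id1 X A))).
    apply (vcancel_l (n1 V c0)). apply heq_eq.
    eapply heq_trans. exact Hx. apply heq_sym. exact Hy. }
  destruct x as [x px], y as [y py]. simpl in Hc. subst y. f_equal. apply proof_irrelevance.
Qed.

Lemma tgt_eq {Y A B C : obj X} (g : hom X B C) (f : hom X A B) (r : hom X Y A) :
  rep (cls (hc g (rep (cls (hc f r))))) = rep (cls (hc (hc g f) r)).
Proof. f_equal. apply cls_eq. exact (vcomp (vinv X (asc g f r)) (hc2 (vid g) (vinv X (rho _)))). Qed.

Lemma id_eq {Y A : obj X} (c : Cls Y A) : rep c = rep (cls (hc (id1 X A) (rep c))).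
Proof. f_equal. rewrite (cls_eq _ _ (lu (rep c))). symmetry. apply cls_rep. Qed.

Lemma inv_eq {Y A B : obj X} (u : hom X A B) (c : Cls Y B) :
  rep c = rep (cls (hc u (rep (cls (hc (inv1 u) (rep c)))))).
Proof.
  f_equal. rewrite (cls_eq _ (rep c)). symmetry; apply cls_rep.
  exact (vcomp (lu _) (vcomp (hc2 (vinv X (co u)) (vid _)) (vcomp (vinv X (asc _ _ _))
     (hc2 (vid u) (vinv X (rho _)))))).
Qed.

Definition vidB {A B} (U : H1 A B) : H2 U U.
Proof.
  refine (mkH2 (vid (u1 U)) _). intros Y c. rewrite hc2_id, vcomp1r. apply heq_refl.
Defined.

Definition vcompB {A B} {U V W : H1 A B} (b : H2 V W) (a : H2 U V) : H2 U W.
Proof.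
  refine (mkH2 (vcomp (c2 b) (c2 a)) _). intros Y c.
  rewrite hc2_vcomp_l, vcompA.
  apply heq_trans with (b := vcomp (n1 V c) (hc2 (c2 a) (vid (rep c)))).
  apply heq_vcomp. apply heq_refl. apply (c2p b). apply (c2p a).
Defined.

Definition vinvB {A B} {U V : H1 A B} (a : H2 U V) : H2 V U.
Proof.
  refine (mkH2 (vinv X (c2 a)) _). intros Y c.
  apply heq_trans with (b := vcomp (vcomp (n1 V c) (hc2 (c2 a) (vid (rep c)))) (hc2 (vinv X (c2 a)) (vid (rep c)))).
  apply heq_vcomp. apply heq_refl. apply heq_sym, (c2p a).
  rewrite <- vcompA, <- hc2_vcomp_l, vinvr, hc2_id, vcomp1r. apply heq_refl.
Defined.

Definition hcB {A B C} (G : H1 B C) (F : H1 A B) : H1 A C :=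
  mkH1 (hc (u1 G) (u1 F)) (fun Y c =>
    vcomp (cell_of_eq (tgt_eq (u1 G) (u1 F) (rep c)))
      (vcomp (n1 G (cls (hc (u1 F) (rep c))))
        (vcomp (hc2 (vid (u1 G)) (n1 F c)) (asc (u1 G) (u1 F) (rep c))))).

Definition idB (A : obj X) : H1 A A :=
  mkH1 (id1 X A) (fun Y c => vcomp (cell_of_eq (id_eq c)) (lu (rep c))).

Definition invB {A B} (F : H1 A B) : H1 B A :=
  mkH1 (inv1 (u1 F)) (fun Y c =>
    vcomp (lu _) (vcomp (hc2 (ev (u1 F)) (vid _)) (vcomp (vinv X (asc _ _ _))
      (vcomp (hc2 (vid (inv1 (u1 F))) (vinv X (n1 F (cls (hc (inv1 (u1 F)) (rep c))))))
        (cell_of_eq (f_equal (hc (inv1 (u1 F))) (inv_eq (u1 F) c))))))).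

End B.
Arguments mkH1 {X A B} _ _.
Arguments u1 {X A B} _.
Arguments n1 {X A B} _ {Y} _.
Arguments mkH2 {X A B U V} _ _.
Arguments c2 {X A B U V} _.
Arguments c2p {X A B U V} _ _ _.


Section B2.
Context {X : Bigroupoid} (HAU : isAU X).

Lemma H1_eq {A B : obj X} (U V : H1 A B) : u1 U = u1 V -> (forall Y (c : Cls Y A), heq (n1 U c) (n1 V c)) -> U = V.
Proof.
  destruct U as [u n], V as [v m]. simpl. intros p H. destruct p. f_equal.
  apply functional_extensionality_dep. intros Y. apply functional_extensionality_dep. intros c.
  apply heq_eq. apply H.
Qed.

Lemma hcB_lid {A B : obj X} (F : H1 A B) : hcB (idB B) F = F.
Proof.
  apply H1_eq. simpl. apply (lu_eq HAU). intros Y c. simpl.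
  eapply heq_trans. apply heq_ce_l.
  eapply heq_trans. eapply heq_vid_l. eapply heq_trans. apply heq_ce_l. apply (heq_lu HAU).
  eapply heq_trans. eapply heq_vid_r. apply (heq_asc HAU).
  apply (hc2_lid HAU).
Qed.

Lemma cls_lu {Y A : obj X} (c : Cls Y A) : cls (hc (id1 X A) (rep c)) = c.
Proof. rewrite (cls_eq _ _ (lu (rep c))). apply cls_rep. Qed.

Lemma hcB_rid {A B : obj X} (F : H1 A B) : hcB F (idB A) = F.
Proof.
  apply H1_eq. simpl. apply (ru_eq HAU). intros Y c. simpl.
  eapply heq_trans. apply heq_ce_l.
  eapply heq_trans. eapply heq_vid_r.
  { eapply heq_trans. eapply heq_vid_r. apply (heq_asc HAU).
    eapply heq_trans. eapply heq_hc2. apply heq_refl.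
    eapply heq_trans. apply heq_ce_l. apply (heq_lu HAU).
    rewrite hc2_id. apply heq_refl. }
  apply heq_n1. apply cls_lu.
Qed.

Lemma rassoc {A B} {f g h k h' : hom X A B} (x : cell X h k) (y : cell X g h) (x' : cell X h' k) (y' : cell X g h')
  (z : cell X f g) : vcomp x y = vcomp x' y' -> vcomp x (vcomp y z) = vcomp x' (vcomp y' z).
Proof. intros E. rewrite !vcompA, E. reflexivity. Qed.

Lemma hcB_assoc {A B C D : obj X} (H : H1 C D) (G : H1 B C) (F : H1 A B) :
  hcB (hcB H G) F = hcB H (hcB G F).
Proof.
  apply H1_eq. simpl. apply (assoc_eq HAU). intros Y c. simpl.
  set (h := u1 H). set (g := u1 G). set (f := u1 F). set (r := rep c).
  set (k1 := cls (hc f r)).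
  set (Core := vcomp (n1 H (cls (hc g (rep k1)))) (vcomp (hc2 (vid h) (n1 G k1))
      (hc2 (vid h) (hc2 (vid g) (n1 F c))))).
  apply heq_trans with (b := Core).
  - eapply heq_trans. apply heq_ce_l.
    eapply heq_trans. eapply heq_vcomp. apply heq_refl. apply heq_ce_l.
    rewrite <- !vcompA.
    pose proof (asc_nat X _ _ _ _ h h g g _ _ (vid h) (vid g) (n1 F c)) as E.
    rewrite hc2_id in E.
    rewrite (rassoc _ _ _ _ _ E).
    unfold Core. eapply heq_vcomp. 2: apply heq_refl. eapply heq_vcomp. 2: apply heq_refl.
    eapply heq_vid_r. eapply heq_trans. eapply heq_vid_l. apply (heq_asc HAU). apply (heq_asc HAU).
  - apply heq_sym.
    eapply heq_trans. apply heq_ce_l.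
    eapply heq_trans. eapply heq_vcomp. eapply heq_vcomp. apply heq_refl. eapply heq_hc2. apply heq_refl.
      apply heq_ce_l.
      apply heq_n1. apply cls_eq. exact (vcomp (hc2 (vid g) (rho _)) (asc g f r)).
    rewrite !hc2_vcomp_r. rewrite <- !vcompA.
    unfold Core. eapply heq_vcomp. 2: apply heq_refl. eapply heq_vcomp. 2: apply heq_refl.
    eapply heq_vid_r. eapply heq_trans. eapply heq_vid_l. 2: apply (heq_asc HAU).
    eapply heq_trans. eapply heq_hc2. apply heq_refl. apply (heq_asc HAU).
    rewrite hc2_id. apply heq_refl.
Qed.

Definition hc2B {A B C : obj X} {G G' : H1 B C} {F F' : H1 A B} (b : H2 G G') (a : H2 F F') :
  H2 (hcB G F) (hcB G' F').
Proof.
  refine (@mkH2 X _ _ (hcB G F) (hcB G' F') (hc2 (c2 b) (c2 a)) _). intros Y c. simpl.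
  rewrite <- vcompA. eapply heq_trans. apply heq_ce_l.
  rewrite <- !vcompA. rewrite (asc_nat X _ _ _ _ _ _ _ _ _ _ (c2 b) (c2 a) (vid (rep c))).
  rewrite (vcompA _ _ _ _ _ _ _ (hc2 (vid (u1 G')) _)), <- hc2_comp, vcomp1l.
  eapply heq_trans. eapply heq_vcomp. eapply heq_vcomp. apply heq_refl.
    eapply heq_hc2. apply heq_refl. apply (c2p a).
    apply heq_n1. apply cls_eq. exact (hc2 (vinv X (c2 a)) (vid (rep c))).
  rewrite (hc2_split_l (c2 b)), !vcompA.
  eapply heq_vcomp. apply heq_refl. eapply heq_vcomp. apply heq_refl.
  eapply heq_trans. apply (c2p b). apply heq_sym. apply heq_ce_l.
Defined.

Lemma heq_fam {T : Type} {A B : obj X} (F1 F2 : T -> hom X A B) (M : forall t, cell X (F1 t) (F2 t))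
  (t t' : T) : t = t' -> heq (M t) (M t').
Proof. intros ->. apply heq_refl. Qed.

Lemma cast_nat {A B Y : obj X} {u v : hom X B A} (x : cell X u v) {r r1 : hom X Y B} (q : r = r1) :
  vcomp (cell_of_eq (f_equal (hc v) q)) (hc2 x (vid r)) = vcomp (hc2 x (vid r1)) (cell_of_eq (f_equal (hc u) q)).
Proof. destruct q. simpl. rewrite vcomp1l, vcomp1r. reflexivity. Qed.

Lemma asc_inv_nat {A B C D : obj X} {h h' : hom X C D} {g g' : hom X B C} {f f' : hom X A B}
  (c : cell X h h') (b : cell X g g') (a : cell X f f') :
  vcomp (vinv X (asc h' g' f')) (hc2 c (hc2 b a)) = vcomp (hc2 (hc2 c b) a) (vinv X (asc h g f)).
Proof.
  apply (vcancel_l (asc h' g' f')). rewrite !vcompA, vinvr, vcomp1l, asc_nat, <- vcompA, vinvr, vcomp1r.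
  reflexivity. Qed.

Lemma inv2_core {A B Y : obj X} {u u' : hom X A B} (a : cell X u u') (rd : hom X Y A) (r1 : hom X Y B)
  (N' : cell X (hc u' rd) r1) :
  vcomp (hc2 (ev u') (vid rd)) (vcomp (vinv X (asc (inv1 u') u' rd))
     (vcomp (hc2 (vid (inv1 u')) (vinv X N')) (hc2 (inv2 a) (vid r1))))
  = vcomp (hc2 (ev u) (vid rd)) (vcomp (vinv X (asc (inv1 u) u rd))
     (hc2 (vid (inv1 u)) (vinv X (vcomp N' (hc2 a (vid rd)))))).
Proof.
  rewrite <- hc2_comp, vcomp1l, vcomp1r.
  assert (E1 : hc2 (inv2 a) (vinv X N') = vcomp (hc2 (inv2 a) (hc2 a (vid rd)))
      (hc2 (vid (inv1 u)) (vinv X (vcomp N' (hc2 a (vid rd)))))).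
  { rewrite <- hc2_comp, vcomp1r, vinv_vcomp, vcompA, vinvr, vcomp1l. reflexivity. }
  rewrite E1, (vcompA _ _ _ _ _ _ _ (vinv X _)), asc_inv_nat, <- !vcompA, (vcompA _ _ _ _ _ _ _ (hc2 (ev u') _)),
    <- hc2_comp, ev_nat, vcomp1l. reflexivity.
Qed.

Definition inv2B {A B : obj X} {F F' : H1 A B} (a : H2 F F') : H2 (invB F) (invB F').
Proof.
  refine (@mkH2 X _ _ (invB F) (invB F') (inv2 (c2 a)) _). intros Y c. simpl.
  rewrite <- !vcompA. rewrite (cast_nat (inv2 (c2 a))).
  match goal with |- context [vcomp (hc2 (ev ?u') (vid ?rd)) (vcomp (vinv X (asc _ _ _))
     (vcomp (hc2 (vid _) (vinv X ?N')) (vcomp (hc2 (inv2 ?aa) (vid ?r1)) ?z)))] =>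
     pose proof (inv2_core aa rd r1 N') as C;
     apply (f_equal (fun t => vcomp t z)) in C; rewrite <- !vcompA in C; rewrite C
  end.
  assert (Ed : cls (hc (inv1 (u1 F')) (rep c)) = cls (hc (inv1 (u1 F)) (rep c))).
  { apply cls_eq. exact (hc2 (inv2 (vinv X (c2 a))) (vid (rep c))). }
  eapply heq_vcomp. eapply heq_vcomp. eapply heq_vcomp. eapply heq_vcomp.
  - eapply heq_trans. apply heq_ce. apply heq_sym. apply heq_ce.
  - eapply heq_hc2. apply heq_refl. apply heq_vinv. eapply heq_trans. apply (c2p a). apply heq_n1. exact Ed.
  - apply (heq_fam (fun k => hc (inv1 (u1 F)) (hc (u1 F) (rep k))) (fun k => hc (hc (inv1 (u1 F)) (u1 F)) (rep k))
      (fun k => vinv X (asc (inv1 (u1 F)) (u1 F) (rep k)))). exact Ed.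
  - apply (heq_fam (fun k => hc (hc (inv1 (u1 F)) (u1 F)) (rep k)) (fun k => hc (id1 X A) (rep k))
      (fun k => hc2 (ev (u1 F)) (vid (rep k)))). exact Ed.
  - apply (heq_fam (fun k => hc (id1 X A) (rep k)) (fun k => rep k) (fun k => lu (rep k))). exact Ed.
Defined.

Lemma ev_core {Y A B : obj X} (F : H1 A B) (d c : Cls Y A) (E : d = c)
  (q : rep (cls (hc (u1 F) (rep c))) = rep (cls (hc (u1 F) (rep d)))) :
  heq (vcomp (lu (rep c)) (hc2 (ev (u1 F)) (vid (rep c))))
    (vcomp (lu (rep d)) (vcomp (hc2 (ev (u1 F)) (vid (rep d))) (vcomp (vinv X (asc _ _ _))
      (vcomp (hc2 (vid (inv1 (u1 F))) (vinv X (n1 F d))) (vcomp (cell_of_eq (f_equal (hc (inv1 (u1 F))) q))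
        (vcomp (hc2 (vid (inv1 (u1 F))) (n1 F c)) (asc (inv1 (u1 F)) (u1 F) (rep c)))))))).
Proof.
  destruct E. rewrite (UIP' q eq_refl). simpl. rewrite vcomp1l.
  rewrite (vcompA _ _ _ _ _ _ _ (hc2 (vid _) (vinv X _))), <- hc2_comp, vinvl, vcomp1l, hc2_id, vcomp1l.
  rewrite vinvl, vcomp1r. apply heq_refl.
Qed.

Definition evB {A B : obj X} (F : H1 A B) : H2 (hcB (invB F) F) (idB A).
Proof.
  refine (@mkH2 X _ _ (hcB (invB F) F) (idB A) (ev (u1 F)) _). intros Y c. simpl.
  rewrite <- vcompA. eapply heq_trans. apply heq_ce_l.
  apply heq_sym. eapply heq_trans. apply heq_ce_l.
  rewrite <- !vcompA. apply heq_sym.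
  apply ev_core.
  rewrite <- (cls_rep c) at 2. apply cls_eq.
  exact (vcomp (lu _) (vcomp (hc2 (ev (u1 F)) (vid _)) (vcomp (vinv X (asc _ _ _))
     (hc2 (vid _) (vinv X (rho _))) ))).
Defined.

Lemma heq_vid_any {A B} {f g f' g' k k' : hom X A B} (a : cell X f g) (b : cell X f' g') :
  heq a (vid k) -> heq b (vid k') -> f = f' -> heq a b.
Proof.
  intros Ha Hb E. eapply heq_trans. exact Ha. apply heq_sym. eapply heq_trans. exact Hb.
  destruct Ha as [p [q _]]. destruct Hb as [p' [q' _]]. apply heq_vid. congruence.
Qed.

Lemma co_core {Y A B : obj X} (u : hom X A B) (rd : hom X Y A) (r : hom X Y B) (N : cell X (hc u rd) r) :
  heq (vcomp N (vcomp (hc2 (vid u) (vcomp (lu rd) (vcomp (hc2 (ev u) (vid rd)) (vcomp (vinv X (asc (inv1 u) u rd))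
         (hc2 (vid (inv1 u)) (vinv X N))))))
        (vcomp (asc u (inv1 u) r) (hc2 (co u) (vid r)))))
      (vid r).
Proof.
  rewrite !hc2_vcomp_r.
  assert (EQ1 : vcomp (hc2 (vid u) (hc2 (vid (inv1 u)) (vinv X N))) (vcomp (asc u (inv1 u) r) (hc2 (co u) (vid r)))
     = vcomp (asc u (inv1 u) (hc u rd)) (vcomp (hc2 (co u) (vid (hc u rd))) (hc2 (vid (id1 X B)) (vinv X N)))).
  { rewrite vcompA, <- asc_nat, hc2_id, <- vcompA, <- !hc2_comp, !vcomp1l, !vcomp1r. reflexivity. }
  rewrite <- !vcompA. rewrite EQ1.
  apply heq_trans with (b := vcomp N (vinv X N)).
  2: { rewrite vinvr. apply heq_refl. }
  eapply heq_vcomp. 2: apply heq_refl.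
  rewrite !vcompA. eapply heq_trans. eapply heq_vid_l.
  2: apply (hc2_lid HAU).
  apply heq_trans with (b := hc2 (vcomp (hc2 (vid u) (ev u)) (vcomp (asc u (inv1 u) u) (hc2 (co u) (vid u)))) (vid rd)).
  2: { eapply heq_trans. eapply heq_hc2. apply (zigzag HAU). apply heq_refl. rewrite hc2_id. apply heq_refl. }
  rewrite !hc2_vcomp_l. rewrite <- !vcompA.
  eapply heq_trans. eapply heq_vid_l.
    eapply heq_trans. eapply heq_hc2. apply heq_refl. apply (heq_lu HAU). rewrite hc2_id. apply heq_refl.
  rewrite (vcompA _ _ _ _ _ _ _ (hc2 (vid u) (vinv X _))).
  eapply heq_vcomp. eapply heq_vcomp.
  - eapply heq_trans. 2: { apply heq_sym. apply (hc2_assoc HAU). } rewrite hc2_id. apply heq_refl.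
  - eapply heq_vid_any.
    + eapply heq_trans. eapply heq_vid_l.
      eapply heq_trans. eapply heq_hc2. apply heq_refl. apply heq_vinv_vid. apply (heq_asc HAU).
      rewrite hc2_id. apply heq_refl. apply (heq_asc HAU).
    + eapply heq_trans. eapply heq_hc2. apply (heq_asc HAU). apply heq_refl. rewrite hc2_id. apply heq_refl.
    + symmetry. apply (assoc_eq HAU).
  - apply heq_sym. apply (hc2_assoc HAU).
Qed.

Lemma co_core' {Y A B : obj X} (u : hom X A B) (rd : hom X Y A) (r t : hom X Y B) (q : r = t)
  (N : cell X (hc u rd) t) :
  heq (vcomp N (vcomp (hc2 (vid u) (vcomp (lu rd) (vcomp (hc2 (ev u) (vid rd)) (vcomp (vinv X (asc (inv1 u) u rd))
         (vcomp (hc2 (vid (inv1 u)) (vinv X N)) (cell_of_eq (f_equal (hc (inv1 u)) q)))))))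
        (vcomp (asc u (inv1 u) r) (hc2 (co u) (vid r)))))
      (vid r).
Proof. destruct q. simpl. rewrite vcomp1r. apply co_core. Qed.

Definition coB {A B : obj X} (F : H1 A B) : H2 (idB B) (hcB F (invB F)).
Proof.
  refine (@mkH2 X _ _ (idB B) (hcB F (invB F)) (co (u1 F)) _). intros Y c. simpl.
  apply heq_trans with (b := vid (rep c)).
  2: { apply heq_sym. eapply heq_trans. apply heq_ce_l. eapply heq_trans. apply (heq_lu HAU). apply heq_vid. apply (lu_eq HAU). }
  rewrite <- !vcompA. eapply heq_trans. apply heq_ce_l. apply co_core'.
Defined.

End B2.


Section Main.
Context {X : Bigroupoid} (HAU : isAU X).

Definition trB {A B : obj X} {U V : H1 A B} (p : U = V) : H2 U V :=
  match p in _ = V0 return H2 U V0 with eq_refl => vidB U end.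

Definition BG : Bigroupoid := {|
  obj := obj X;
  hom := @H1 X;
  cell := fun A B U V => @H2 X A B U V;
  vid := fun A B U => vidB U;
  vcomp := fun A B U V W b a => vcompB b a;
  vinv := fun A B U V a => vinvB a;
  vcompA := fun _ _ _ _ _ _ _ _ _ => H2_uniq HAU _ _;
  vcomp1l := fun _ _ _ _ _ => H2_uniq HAU _ _;
  vcomp1r := fun _ _ _ _ _ => H2_uniq HAU _ _;
  vinvl := fun _ _ _ _ _ => H2_uniq HAU _ _;
  vinvr := fun _ _ _ _ _ => H2_uniq HAU _ _;
  hc := fun A B C G F => hcB G F;
  hc2 := fun A B C G G' F F' b a => hc2B b a;
  hc2_id := fun _ _ _ _ _ => H2_uniq HAU _ _;
  hc2_comp := fun _ _ _ _ _ _ _ _ _ _ _ _ _ => H2_uniq HAU _ _;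
  id1 := fun A => idB A;
  inv1 := fun A B F => invB F;
  inv2 := fun A B F F' a => inv2B a;
  inv2_id := fun _ _ _ => H2_uniq HAU _ _;
  inv2_comp := fun _ _ _ _ _ _ _ => H2_uniq HAU _ _;
  asc := fun A B C D H G F => trB (hcB_assoc HAU H G F);
  asc_nat := fun _ _ _ _ _ _ _ _ _ _ _ _ _ => H2_uniq HAU _ _;
  lu := fun A B F => trB (hcB_lid HAU F);
  lu_nat := fun _ _ _ _ _ => H2_uniq HAU _ _;
  ru := fun A B F => trB (hcB_rid HAU F);
  ru_nat := fun _ _ _ _ _ => H2_uniq HAU _ _;
  ev := fun A B F => evB F;
  ev_nat := fun _ _ _ _ _ => H2_uniq HAU _ _;
  co := fun A B F => coB HAU F;
  co_nat := fun _ _ _ _ _ => H2_uniq HAU _ _;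
  pentagon := fun _ _ _ _ _ _ _ _ _ => H2_uniq HAU _ _;
  triangle := fun _ _ _ _ _ => H2_uniq HAU _ _;
  inverse_ax := fun _ _ _ => H2_uniq HAU _ _
|}.

Lemma BG_AU : isAU BG.
Proof.
  split; [|split].
  - intros A B C D h g f. exists (hcB_assoc HAU h g f). apply H2_uniq. exact HAU.
  - intros A B f. exists (hcB_lid HAU f). apply H2_uniq. exact HAU.
  - intros A B f. exists (hcB_rid HAU f). apply H2_uniq. exact HAU.
Qed.

End Main.


Lemma cheq_heq {X : Bigroupoid} {A B} {f g f' g' : hom X A B} (a : cell X f g) (b : cell X f' g') :
  cell_heq a b <-> heq a b.
Proof.
  split.
  - intros [p [q H]]. destruct p, q. simpl in H. rewrite vcomp1l, vcomp1r in H. subst. apply heq_refl.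
  - intros [p [q H]]. destruct p, q. simpl in H. subst. exists eq_refl, eq_refl. simpl.
    rewrite vcomp1l, vcomp1r. reflexivity.
Qed.

Section Main2.
Context {X : Bigroupoid} (HAU : isAU X).

Lemma c2_ce {A B : obj X} {U V : H1 A B} (p : U = V) :
  c2 (@cell_of_eq (BG HAU) A B U V p) = cell_of_eq (f_equal u1 p).
Proof. destruct p. reflexivity. Qed.

Lemma c2_trB {A B : obj X} {U V : H1 A B} (p : U = V) :
  c2 (trB p) = cell_of_eq (f_equal u1 p).
Proof. destruct p. reflexivity. Qed.

Lemma heqB_proj {A B : obj X} {U V U' V' : H1 A B} (x : H2 U V) (y : H2 U' V') :
  @cell_heq (BG HAU) A B U V U' V' x y -> heq (c2 x) (c2 y).
Proof.
  intros [p [q H]]. apply (f_equal c2) in H. simpl in H. rewrite !c2_ce in H.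
  apply cheq_heq. exists (f_equal u1 p), (f_equal u1 q). exact H.
Qed.

Definition Psi (Phi : StrictMor X (BG HAU)) : StrictMor X X.
Proof.
  refine (@Build_StrictMor X X (fun A => (sm0 Phi A : obj X)) (fun A B f => u1 (sm1 Phi f))
     (fun A B f g a => c2 (sm2 Phi a)) _ _ _ _ _ _ _ _ _ _ _ _).
  - intros. exact (f_equal u1 (sm_hc _ _ Phi A B C g f)).
  - intros. exact (f_equal u1 (sm_id1 _ _ Phi A)).
  - intros. exact (f_equal u1 (sm_inv1 _ _ Phi A B f)).
  - intros. exact (f_equal c2 (sm_vid _ _ Phi A B f)).
  - intros. exact (f_equal c2 (sm_vcomp _ _ Phi A B f g h b a)).
  - intros. apply cheq_heq. apply (heqB_proj _ _ (sm_hc2 _ _ Phi A B C g g' f f' b a)).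
  - intros. apply cheq_heq. apply (heqB_proj _ _ (sm_inv2 _ _ Phi A B f g a)).
  - intros. apply cheq_heq. eapply heq_trans. apply (heqB_proj _ _ (sm_asc _ _ Phi A B C D h g f)).
    simpl. rewrite c2_trB. eapply heq_trans. apply heq_ce. apply heq_sym. eapply heq_trans. apply (heq_asc HAU).
    apply heq_refl.
  - intros. apply cheq_heq. eapply heq_trans. apply (heqB_proj _ _ (sm_lu _ _ Phi A B f)).
    simpl. rewrite c2_trB. eapply heq_trans. apply heq_ce. apply heq_sym. eapply heq_trans. apply (heq_lu HAU).
    apply heq_refl.
  - intros. apply cheq_heq. eapply heq_trans. apply (heqB_proj _ _ (sm_ru _ _ Phi A B f)).
    simpl. rewrite c2_trB. eapply heq_trans. apply heq_ce. apply heq_sym. eapply heq_trans. apply (heq_ru HAU).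
    apply heq_refl.
  - intros. apply cheq_heq. apply (heqB_proj _ _ (sm_ev _ _ Phi A B f)).
  - intros. apply cheq_heq. apply (heqB_proj _ _ (sm_co _ _ Phi A B f)).
Defined.

Definition idSM : StrictMor X X.
Proof.
  refine (@Build_StrictMor X X (fun A => A) (fun A B f => f) (fun A B f g a => a) _ _ _ _ _ _ _ _ _ _ _ _);
  intros; try reflexivity; apply cheq_heq; apply heq_refl.
Defined.

Definition liftH1 {A B : obj X} (u : hom X A B) : H1 A B := mkH1 u (fun Y c => rho (hc u (rep c))).

Definition Fl {G : Graph} (Ia : GraphMor G (underlying X)) : GraphMor G (underlying (BG HAU)) :=
  @Build_GraphMor G (underlying (BG HAU)) (gm0 Ia) (fun a b e => liftH1 (gm1 Ia e)).

Definition postc {G : Graph} (M : GraphMor G (underlying (BG HAU))) : GraphMor G (underlying X) :=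
  @Build_GraphMor G (underlying X) (gm0 M) (fun a b e => u1 (gm1 M e)).

End Main2.

Theorem theoremA19 (G : Graph) (Fa : Bigroupoid) (Ia : GraphMor G (underlying Fa))
  (Hfree : is_free_AU_bigroupoid G Fa Ia)
  (A B : obj Fa) (u v : hom Fa A B) (x y : cell Fa u v) :
  x = y.
Proof.
  destruct Hfree as [HAU Huniv].
  destruct (Huniv (BG HAU) (BG_AU HAU) (Fl HAU Ia)) as [Phi [HPhi _]].
  destruct (Huniv Fa HAU Ia) as [M0 [_ Huniq]].
  assert (E1 : Psi HAU Phi = idSM).
  { rewrite <- (Huniq (Psi HAU Phi)), <- (Huniq idSM). reflexivity.
    - destruct Ia. reflexivity.
    - change (postc HAU (gcomp (sm_graph Phi) Ia) = Ia). rewrite HPhi. destruct Ia. reflexivity. }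
  assert (Q : forall M : StrictMor Fa Fa, M = Psi HAU Phi -> sm2 M x = sm2 M y).
  { intros M ->. simpl. f_equal. apply (H2_uniq HAU). }
  exact (Q idSM (eq_sym E1)).
Qed.
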